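(* Let $d, C \ge 1$ be integers, let $\epsilon > 0$, and for each $c = 1, \dots, C$ let $\hat{Z}^c \in \mathbb{R}^{d \times n_c}$ with $n_c \ge 1$. Put $n = \sum_{c=1}^C n_c$ and let $\hat{Z} = [\hat{Z}^1, \hat{Z}^2, \dots, \hat{Z}^C] \in \mathbb{R}^{d \times n}$ be the horizontal concatenation. For a matrix $W \in \mathbb{R}^{d \times m}$ define the coding rate $$R(W, \epsilon) = \frac{1}{2} \log\det\Big(I_d + \frac{1}{m \epsilon} W W^\top\Big),$$ and define $$\mathrm{TrR} = R(\hat{Z}, \epsilon) - \sum_{c=1}^C \frac{n_c}{n} R(\hat{Z}^c, \epsilon).$$ Then: (i) $\mathrm{TrR} \ge 0$, and equality holds when $\frac{1}{n}\hat{Z}\hat{Z}^\top = \frac{1}{n_c}\hat{Z}^c (\hat{Z}^c)^\top$ for all $c = 1, \dots, C$. (ii) $$\mathrm{TrR} \le \frac{1}{2} \sum_{c=1}^{C} \left( \log\det\Big(I_d + \frac{1}{n \epsilon} \hat{Z}^c (\hat{Z}^c)^\top\Big) - \frac{n_c}{n} \log\det\Big(I_d + \frac{1}{n_c \epsilon} \hat{Z}^c (\hat{Z}^c)^\top\Big) \right),$$ and equality holds when $\hat{Z}^{c_1} (\hat{Z}^{c_2})^\top = 0$ for all $1 \le c_1 < c_2 \le C$.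
   Context: $I_d$ denotes the $d \times d$ identity matrix and $\log\det$ is the logarithm of the determinant (of a symmetric positive definite matrix). The columns of $\hat{Z}^c$ are thought of as feature vectors of the samples in class $c$; $\mathrm{TrR}$ is the paper's ''TransRate'' score. *)

(* Defs.v *)
From HB Require Import structures.
From mathcomp Require Import all_boot all_order all_algebra.
From mathcomp Require Import all_classical all_reals all_analysis.
Set Implicit Arguments. Unset Strict Implicit. Unset Printing Implicit Defensive.
Import Order.TTheory GRing.Theory Num.Theory.
Local Open Scope ring_scope.

Definition logdet (R : realType) (d : nat) (A : 'M[R]_d) : R := ln (\det A).

Definition coding_rate (R : realType) (d m : nat) (W : 'M[R]_(d, m)) (eps : R) : R :=
  2^-1 * logdet (1%:M + (m%:R * eps)^-1 *: (W *m W^T)).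

Definition concat_cols (R : realType) (d C : nat) (nc : 'I_C -> nat)
  (Z : forall c : 'I_C, 'M[R]_(d, nc c)) : 'M[R]_(d, \sum_(c < C) nc c) :=
  mxrow Z.

Definition TrR (R : realType) (d C : nat) (nc : 'I_C -> nat)
  (Z : forall c : 'I_C, 'M[R]_(d, nc c)) (eps : R) : R :=
  coding_rate (concat_cols Z) eps
  - \sum_(c < C) ((nc c)%:R / (\sum_(c' < C) nc c')%:R) * coding_rate (Z c) eps.

(* Main.v *)
Require Import Defs.
From HB Require Import structures.
From mathcomp Require Import all_boot all_order all_algebra.
From mathcomp Require Import all_classical all_reals all_analysis.
Import Order.TTheory GRing.Theory Num.Theory.
Local Open Scope ring_scope.

From mathcomp Require Import ring lra.
Set Implicit Arguments. Unset Strict Implicit. Unset Printing Implicit Defensive.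

Section QF.
Variable R : realFieldType.

Definition qf n (M : 'M[R]_n) (x : 'rV[R]_n) : R := (x *m M *m x^T) 0 0.
Definition pd n (M : 'M[R]_n) := M^T = M /\ forall x, x != 0 -> 0 < qf M x.
Definition psd n (M : 'M[R]_n) := M^T = M /\ forall x, 0 <= qf M x.

Lemma eD m n (A B : 'M[R]_(m, n)) i j : (A + B) i j = A i j + B i j.
Proof. by rewrite mxE. Qed.
Lemma eZ m n k (A : 'M[R]_(m, n)) i j : (k *: A) i j = k * A i j.
Proof. by rewrite mxE. Qed.
Lemma eN m n (A : 'M[R]_(m, n)) i j : (- A) i j = - A i j.
Proof. by rewrite mxE. Qed.
Lemma eB m n (A B : 'M[R]_(m, n)) i j : (A - B) i j = A i j - B i j.
Proof. by rewrite !mxE. Qed.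

Lemma qfD n (A B : 'M[R]_n) x : qf (A + B) x = qf A x + qf B x.
Proof. by rewrite /qf mulmxDr mulmxDl mxE. Qed.

Lemma qfZ n k (A : 'M[R]_n) x : qf (k *: A) x = k * qf A x.
Proof. by rewrite /qf -scalemxAr -scalemxAl mxE. Qed.

Lemma qfN n (A : 'M[R]_n) x : qf (- A) x = - qf A x.
Proof. by rewrite /qf mulmxN mulNmx mxE. Qed.

Lemma qfB n (A B : 'M[R]_n) x : qf (A - B) x = qf A x - qf B x.
Proof. by rewrite qfD qfN. Qed.

Lemma qf0 n (A : 'M[R]_n) : qf A 0 = 0.
Proof. by rewrite /qf mul0mx mul0mx mxE. Qed.

Lemma qf_sum (I : Type) (s : seq I) n (F : I -> 'M[R]_n) x :
  qf (\sum_(i <- s) F i) x = \sum_(i <- s) qf (F i) x.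
Proof.
elim: s => [|i s IH]; first by rewrite !big_nil /qf mulmx0 mul0mx mxE.
by rewrite !big_cons qfD IH.
Qed.

Lemma mx11_mulE (A : 'M[R]_(1, 1)) (B : 'M[R]_(1,1)) : (A *m B) 0 0 = A 0 0 * B 0 0.
Proof. by rewrite mxE big_ord1. Qed.

Lemma tr11 m (u : 'M[R]_(1, m)) (v : 'M[R]_(1, m)) : (u *m v^T) 0 0 = (v *m u^T) 0 0.
Proof. transitivity ((v *m u^T)^T 0 0); last by rewrite mxE. by rewrite trmx_mul trmxK. Qed.

Lemma sqnorm_ge0 m (u : 'M[R]_(1, m)) : 0 <= (u *m u^T) 0 0.
Proof. rewrite mxE; apply: sumr_ge0 => i _; rewrite mxE; exact: mulr_ge0_le0 || by rewrite -expr2 sqr_ge0. Qed.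

Lemma sqnorm_gt0 m (u : 'M[R]_(1, m)) : u != 0 -> 0 < (u *m u^T) 0 0.
Proof.
move=> /matrix0Pn [i [j uij]].
rewrite mxE (bigD1 j) //= ltr_pwDl //.
  by rewrite mxE -expr2 (ord1 i) in uij *; rewrite lt_def sqr_ge0 sqrf_eq0 uij.
by apply: sumr_ge0 => k _; rewrite mxE -expr2 sqr_ge0.
Qed.

Lemma qf1 n (x : 'rV[R]_n) : qf 1%:M x = (x *m x^T) 0 0.
Proof. by rewrite /qf mulmx1. Qed.

Lemma qf_conj n m (B : 'M[R]_n) (Y : 'M[R]_(n, m)) (y : 'rV[R]_m) :
  qf (Y^T *m B *m Y) y = qf B (y *m Y^T).
Proof. by rewrite /qf trmx_mul trmxK !mulmxA. Qed.

Lemma qf_gram n m (Y : 'M[R]_(n, m)) x : qf (Y *m Y^T) x = ((x *m Y) *m (x *m Y)^T) 0 0.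
Proof. by rewrite /qf trmx_mul !mulmxA. Qed.

Lemma qf_gramT n m (Y : 'M[R]_(m, n)) x : qf (Y^T *m Y) x = ((x *m Y^T) *m (x *m Y^T)^T) 0 0.
Proof. by rewrite /qf trmx_mul trmxK !mulmxA. Qed.

End QF.

Section Schur.
Variable R : realFieldType.

Definition pa n (M : 'M[R]_(1+n)) : R := ulsubmx M 0 0.
Definition pbeta n (M : 'M[R]_(1+n)) (y : 'rV[R]_n) : R := (ursubmx M *m y^T) 0 0.
Definition schur n (M : 'M[R]_(1+n)) : 'M[R]_n :=
  drsubmx M - (pa M)^-1 *: ((ursubmx M)^T *m ursubmx M).

Lemma sym_dl n (M : 'M[R]_(1+n)) : M^T = M -> dlsubmx M = (ursubmx M)^T.
Proof. by move=> sM; rewrite trmx_ursub sM. Qed.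

Lemma qf_block n (M : 'M[R]_(1+n)) s y : M^T = M ->
  qf M (row_mx (s%:M) y) = s^+2 * pa M + 2 * s * pbeta M y + qf (drsubmx M) y.
Proof.
move=> sM; rewrite /qf -{1}(submxK M) tr_row_mx mul_row_block mul_row_col.
rewrite tr_scalar_mx !mul_scalar_mx !mulmxDl mul_mx_scalar (sym_dl sM) -scalemxAl.
rewrite /pbeta /pa.
rewrite mul_mx_scalar !eD !eZ tr11; ring.
Qed.

Lemma qf_schur n (M : 'M[R]_(1+n)) y :
  qf (schur M) y = qf (drsubmx M) y - (pa M)^-1 * pbeta M y ^+ 2.
Proof.
rewrite /schur qfB qfZ qf_gramT mx11_mulE.
have -> : (y *m (ursubmx M)^T)^T 0 0 = (y *m (ursubmx M)^T) 0 0 by rewrite mxE.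
by rewrite /pbeta tr11 expr2.
Qed.

Lemma qf_block_schur n (M : 'M[R]_(1+n)) s y : M^T = M -> pa M != 0 ->
  qf M (row_mx (s%:M) y) = pa M * (s + pbeta M y / pa M) ^+ 2 + qf (schur M) y.
Proof. by move=> sM a0; rewrite qf_block // qf_schur; field. Qed.

Lemma beta0 n (M : 'M[R]_(1+n)) : pbeta M 0 = 0.
Proof. by rewrite /pbeta trmx0 mulmx0 mxE. Qed.

Lemma qf_e n (M : 'M[R]_(1+n)) : M^T = M -> qf M (row_mx 1%:M 0) = pa M.
Proof. by move=> sM; rewrite qf_block // beta0 qf0; ring. Qed.

Lemma row_mx_neq0r n (t : 'M[R]_1) (y : 'rV[R]_n) : y != 0 -> row_mx t y != 0.
Proof. by move=> y0; rewrite row_mx_eq0 negb_and y0 orbT. Qed.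

Lemma row_mx_neq0l n (y : 'rV[R]_n) : row_mx (1%:M : 'M[R]_1) y != 0.
Proof.
rewrite row_mx_eq0 negb_and; apply/orP; left; apply/eqP => /matrixP/(_ 0 0).
by rewrite !mxE /= => /eqP; rewrite oner_eq0.
Qed.

Lemma pd_pa n (M : 'M[R]_(1+n)) : pd M -> 0 < pa M.
Proof. by case=> sM pM; rewrite -qf_e //; apply: pM; exact: row_mx_neq0l. Qed.

Lemma schur_sym n (M : 'M[R]_(1+n)) : M^T = M -> (schur M)^T = schur M.
Proof.
move=> sM; rewrite /schur linearB /= linearZ /= trmx_mul trmxK.
by rewrite trmx_drsub sM.
Qed.

Lemma schur_min n (M : 'M[R]_(1+n)) s y : M^T = M -> 0 < pa M ->
  qf (schur M) y <= qf M (row_mx (s%:M) y).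
Proof.
move=> sM a0; rewrite qf_block_schur ?gt_eqF // lerDr.
by apply: mulr_ge0; [exact: ltW | exact: sqr_ge0].
Qed.

Lemma schur_eq n (M : 'M[R]_(1+n)) y : M^T = M -> 0 < pa M ->
  qf (schur M) y = qf M (row_mx ((- (pbeta M y / pa M))%:M) y).
Proof.
move=> sM a0; rewrite qf_block_schur ?gt_eqF //.
by rewrite addNr expr0n /= mulr0 add0r.
Qed.

Lemma pd_schur n (M : 'M[R]_(1+n)) : pd M -> pd (schur M).
Proof.
move=> pM; have a0 := pd_pa pM; case: pM => sM pM; split; first exact: schur_sym.
move=> y y0; rewrite schur_eq //; apply: pM; exact: row_mx_neq0r.
Qed.

Lemma det_schur n (M : 'M[R]_(1+n)) : M^T = M -> pa M != 0 ->
  \det M = pa M * \det (schur M).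
Proof.
move=> sM a0.
pose L : 'M[R]_(1+n) := block_mx 1%:M 0 (- ((pa M)^-1 *: dlsubmx M)) 1%:M.
have dL : \det L = 1 by rewrite det_lblock !det1 mulr1.
have -> : \det M = \det (L *m M) by rewrite det_mulmx dL mul1r.
rewrite /L -[X in _ *m X](submxK M) mulmx_block !mul1mx !mul0mx !addr0.
rewrite /schur (sym_dl sM); rewrite /pa in a0 *.
set a := ulsubmx M 0 0.
have -> : ulsubmx M = a%:M by exact: mx11_scalar.
rewrite mul_mx_scalar scalerN scalerA mulfV // scale1r addNr.
by rewrite det_ublock det_scalar1 mulNmx -scalemxAl addrC.
Qed.

End Schur.

Section Det.
Variable R : realFieldType.

Lemma pd_det_gt0 n (M : 'M[R]_n) : pd M -> 0 < \det M.
Proof.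
elim: n M => [|n IH] M pM; first by rewrite det_mx00.
pose M' : 'M[R]_(1 + n) := M.
have a0 := pd_pa (M := M') pM.
rewrite (det_schur (M := M')) ?(gt_eqF a0) //; last by case: pM.
by rewrite mulr_gt0 // IH //; apply: pd_schur.
Qed.

Lemma det_mono n (A B : 'M[R]_n) : pd A -> pd B -> (forall x, qf A x <= qf B x) ->
  \det A <= \det B.
Proof.
elim: n A B => [|n IH] A B pA pB le; first by rewrite !det_mx00.
pose A' : 'M[R]_(1 + n) := A; pose B' : 'M[R]_(1 + n) := B.
have aA := pd_pa (M := A') pA; have aB := pd_pa (M := B') pB.
have sA : A'^T = A' by case: pA.
have sB : B'^T = B' by case: pB.
rewrite (det_schur (M := A')) ?(gt_eqF aA) // (det_schur (M := B')) ?(gt_eqF aB) //.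
apply: ler_pM.
- exact: ltW.
- exact/ltW/pd_det_gt0/pd_schur.
- by rewrite -(qf_e sA) -(qf_e sB) le.
apply: IH; try exact: pd_schur.
move=> y; rewrite (schur_eq y sB aB).
apply: le_trans (le _); exact: schur_min.
Qed.

End Det.

Section Concave.
Variable R : realType.

Lemma sum_gt0 (I : Type) (s : seq I) (F : I -> R) :
  (forall i, 0 < F i) -> (0 < size s)%N -> 0 < \sum_(i <- s) F i.
Proof.
case: s => [//|i s] Fp _; rewrite big_cons ltr_pwDl //.
by apply: sumr_ge0 => j _; exact: ltW.
Qed.

Lemma sum1_neq_nil (I : Type) (s : seq I) (w : I -> R) :
  \sum_(i <- s) w i = 1 -> (0 < size s)%N.
Proof. by case: s => //; rewrite big_nil => /eqP; rewrite eq_sym oner_eq0. Qed.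

Lemma ln_jensen (I : Type) (s : seq I) (w x : I -> R) :
  (forall i, 0 < w i) -> (forall i, 0 < x i) -> \sum_(i <- s) w i = 1 ->
  \sum_(i <- s) w i * ln (x i) <= ln (\sum_(i <- s) w i * x i).
Proof.
move=> wp xp w1; set m := \sum_(i <- s) w i * x i.
have m0 : 0 < m by apply: sum_gt0 (sum1_neq_nil w1) => i; exact: mulr_gt0.
have H i : w i * ln (x i) <= w i * ln m + (w i * x i / m - w i).
  have xm : 0 < x i / m by rewrite divr_gt0.
  have : ln (1 + (x i / m - 1)) <= x i / m - 1.
    by apply: le_ln1Dx; lra.
  rewrite addrC subrK ln_div ?posrE // => h.
  have := ler_wpM2l (ltW (wp i)) h; lra.
apply: le_trans (ler_sum _ (fun i _ => H i)) _.
rewrite big_split /= sumrB -mulr_suml w1 mul1r -mulr_suml -/m divff ?gt_eqF //.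
by rewrite subrr addr0.
Qed.

Lemma pd_comb n (I : Type) (s : seq I) (w : I -> R) (M : I -> 'M[R]_n) :
  (forall i, 0 < w i) -> \sum_(i <- s) w i = 1 -> (forall i, pd (M i)) ->
  pd (\sum_(i <- s) w i *: M i).
Proof.
move=> wp w1 pM; split.
  rewrite linear_sum /=; apply: eq_bigr => i _; rewrite linearZ /=.
  by case: (pM i) => -> _.
move=> x x0; rewrite qf_sum; apply: sum_gt0 (sum1_neq_nil w1) => i.
by rewrite qfZ mulr_gt0 //; case: (pM i) => _ ->.
Qed.

Lemma pa_sum n (I : Type) (s : seq I) (w : I -> R) (M : I -> 'M[R]_(1 + n)) :
  pa (\sum_(i <- s) w i *: M i) = \sum_(i <- s) w i * pa (M i).
Proof.
rewrite /pa; elim: s => [|i s IH]; first by rewrite !big_nil !mxE.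
by rewrite !big_cons -IH !mxE.
Qed.

Lemma logdet_concave n (I : Type) (s : seq I) (w : I -> R) (M : I -> 'M[R]_n) :
  (forall i, 0 < w i) -> \sum_(i <- s) w i = 1 -> (forall i, pd (M i)) ->
  \sum_(i <- s) w i * ln (\det (M i)) <= ln (\det (\sum_(i <- s) w i *: M i)).
Proof.
elim: n M => [|n IH] M wp w1 pM.
  by rewrite det_mx00 ln1 big1 // => i _; rewrite det_mx00 ln1 mulr0.
pose M' : I -> 'M[R]_(1 + n) := M.
pose N : 'M[R]_(1 + n) := \sum_(i <- s) w i *: M' i.
have pN : pd N := pd_comb wp w1 pM.
have aN := pd_pa pN.
have sN : N^T = N by case: pN.
have sM i : (M' i)^T = M' i by case: (pM i).
have aM i := pd_pa (M := M' i) (pM i).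
have pS i := pd_schur (M := M' i) (pM i).
have dM i : \det (M' i) = pa (M' i) * \det (schur (M' i)).
  by rewrite det_schur ?gt_eqF.
have pSN : pd (schur N) by apply: pd_schur.
have pSc : pd (\sum_(i <- s) w i *: schur (M' i)) := pd_comb wp w1 pS.
change (\sum_(i <- s) w i * ln (\det (M' i)) <= ln (\det N)).
rewrite (det_schur sN) ?gt_eqF // lnM ?posrE ?pd_det_gt0 //.
under eq_bigr => i _ do rewrite dM lnM ?posrE ?pd_det_gt0 // mulrDr.
rewrite big_split /=; apply: lerD.
  by rewrite /N pa_sum; apply: ln_jensen.
apply: le_trans (IH _ wp w1 pS) _.
rewrite ler_ln ?posrE ?pd_det_gt0 //.
apply: det_mono => // y.
rewrite qf_sum (schur_eq y sN aN) /N qf_sum.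
apply: ler_sum => i _; rewrite !qfZ; apply: ler_wpM2l; first exact: ltW.
exact: schur_min.
Qed.

End Concave.

Section Sub.
Variable R : realType.

Lemma sylvester d m (X : 'M[R]_(d, m)) (Y : 'M[R]_(m, d)) :
  \det (1%:M + X *m Y) = \det (1%:M + Y *m X).
Proof.
pose B : 'M[R]_(d + m) := block_mx 1%:M (- X) Y 1%:M.
pose A1 : 'M[R]_(d + m) := block_mx 1%:M X 0 1%:M.
pose A2 : 'M[R]_(d + m) := block_mx 1%:M 0 (- Y) 1%:M.
have dA1 : \det A1 = 1 by rewrite det_ublock !det1 mulr1.
have dA2 : \det A2 = 1 by rewrite det_lblock !det1 mulr1.
have e1 : \det B = \det (A1 *m B) by rewrite det_mulmx dA1 mul1r.
have e2 : \det B = \det (A2 *m B) by rewrite det_mulmx dA2 mul1r.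
have h1 : \det B = \det (1%:M + X *m Y).
  rewrite e1 /A1 /B mulmx_block !mul1mx !mul0mx !mulmx1 !add0r addNr.
  by rewrite det_lblock det1 mulr1.
have h2 : \det B = \det (1%:M + Y *m X).
  rewrite e2 /A2 /B mulmx_block !mul1mx !mul0mx !mulmx1 !addr0 !mulNmx addNr mulmxN opprK.
  by rewrite det_ublock det1 mul1r addrC.
by rewrite -h1 h2.
Qed.

Lemma psd_pd1 n (A : 'M[R]_n) : psd A -> pd (1%:M + A).
Proof.
case=> sA pA; split; first by rewrite linearD /= trmx1 sA.
move=> x x0; rewrite qfD qf1; have := sqnorm_gt0 x0; have := pA x; lra.
Qed.

Lemma pd_unit n (A : 'M[R]_n) : pd A -> A \in unitmx.
Proof. by move/pd_det_gt0 => h; rewrite unitmxE unitfE gt_eqF. Qed.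

Lemma psd_scale n k (A : 'M[R]_n) : 0 <= k -> psd A -> psd (k *: A).
Proof.
move=> k0 [sA pA]; split; first by rewrite linearZ /= sA.
by move=> x; rewrite qfZ mulr_ge0.
Qed.

Lemma psd_conj n m (B : 'M[R]_n) (Y : 'M[R]_(n, m)) : psd B -> psd (Y^T *m B *m Y).
Proof.
case=> sB pB; split; first by rewrite !trmx_mul trmxK sB mulmxA.
by move=> y; rewrite qf_conj.
Qed.

Lemma psd_gram n m (Y : 'M[R]_(n, m)) : psd (Y *m Y^T).
Proof.
split; first by rewrite trmx_mul trmxK.
by move=> x; rewrite qf_gram sqnorm_ge0.
Qed.

Lemma psd_add n (A B : 'M[R]_n) : psd A -> psd B -> psd (A + B).
Proof.
case=> sA pA [sB pB]; split; first by rewrite linearD /= sA sB.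
by move=> x; rewrite qfD addr_ge0.
Qed.

Lemma psd0 n : psd (0 : 'M[R]_n).
Proof. by split; [rewrite trmx0 | move=> x; rewrite /qf mulmx0 mul0mx mxE]. Qed.

Lemma inv_qf n (A : 'M[R]_n) v : psd A ->
  0 <= qf (invmx (1%:M + A)) v /\ qf (invmx (1%:M + A)) v <= qf 1%:M v.
Proof.
move=> pA; have pP := psd_pd1 pA; have uP := pd_unit pP.
case: pA => sA pA.
set P := 1%:M + A in pP uP *.
have sP : P^T = P by case: pP.
pose u := v *m invmx P.
have ev : v = u *m P by rewrite /u mulmxKV.
have e1 : qf (invmx P) v = qf P u.
  by rewrite /qf -/u ev trmx_mul sP mulmxA.
have e2 : qf 1%:M v = qf (P *m P) u.
  by rewrite qf1 ev trmx_mul sP /qf !mulmxA.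
have qP : 0 <= qf P u by rewrite /P qfD qf1 addr_ge0 ?sqnorm_ge0.
rewrite e1 e2; split => //.
have -> : P *m P = P + A + A^T *m A by rewrite sA /P mulmxDl mul1mx mulmxDr mulmx1 addrA.
rewrite !qfD -addrA lerDl addr_ge0 // qf_gramT sqnorm_ge0 //.
Qed.

Lemma psd_inv n (A : 'M[R]_n) : psd A -> psd (invmx (1%:M + A)).
Proof.
move=> pA; split; last by move=> v; case: (inv_qf v pA).
by rewrite trmx_inv linearD /= trmx1; case: pA => ->.
Qed.

Lemma det_split d m (A : 'M[R]_d) (Y : 'M[R]_(d, m)) k : psd A ->
  \det (1%:M + A + k *: (Y *m Y^T)) =
  \det (1%:M + A) * \det (1%:M + k *: (Y^T *m invmx (1%:M + A) *m Y)).
Proof.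
move=> pA; have uP := pd_unit (psd_pd1 pA).
set P := 1%:M + A in uP *.
have -> : P + k *: (Y *m Y^T) = P *m (1%:M + (invmx P *m (k *: Y)) *m Y^T).
  by rewrite mulmxDr mulmx1 !mulmxA (mulmxV uP) mul1mx -scalemxAl.
rewrite det_mulmx sylvester; congr (_ * \det (1%:M + _)).
by rewrite -!scalemxAr mulmxA.
Qed.

Lemma det_gram_sym d m (Y : 'M[R]_(d, m)) k :
  \det (1%:M + k *: (Y *m Y^T)) = \det (1%:M + k *: (Y^T *m 1%:M *m Y)).
Proof. by rewrite mulmx1 scalemxAl sylvester -scalemxAr. Qed.

Lemma det_sub d m (A : 'M[R]_d) (Y : 'M[R]_(d, m)) k : psd A -> 0 <= k ->
  \det (1%:M + A + k *: (Y *m Y^T)) <= \det (1%:M + A) * \det (1%:M + k *: (Y *m Y^T)).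
Proof.
move=> pA k0; rewrite det_split // det_gram_sym.
apply: ler_wpM2l; first exact/ltW/pd_det_gt0/psd_pd1.
apply: det_mono.
- apply: psd_pd1; apply: (psd_scale k0); apply: psd_conj; exact: psd_inv.
- apply: psd_pd1; apply: (psd_scale k0); apply: psd_conj.
  by split; [rewrite trmx1 | move=> x; rewrite qf1 sqnorm_ge0].
move=> y; rewrite !qfD !qfZ !qf_conj lerD2l; apply: ler_wpM2l => //.
by case: (inv_qf (y *m Y^T) pA).
Qed.

Lemma det_sub_eq d m (A : 'M[R]_d) (Y : 'M[R]_(d, m)) k : psd A -> A *m Y = 0 ->
  \det (1%:M + A + k *: (Y *m Y^T)) = \det (1%:M + A) * \det (1%:M + k *: (Y *m Y^T)).
Proof.
move=> pA AY; rewrite det_split // det_gram_sym; congr (_ * \det (1%:M + _ *: _)).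
have uP := pd_unit (psd_pd1 pA).
have PY : (1%:M + A) *m Y = Y by rewrite mulmxDl mul1mx AY addr0.
by rewrite mulmx1 -mulmxA -[X in invmx _ *m X]PY (mulKmx uP).
Qed.

End Sub.

Section Seq.
Variable R : realType.

Lemma psd_sumZ d (I : Type) (m : I -> nat) (Z : forall i, 'M[R]_(d, m i)) k (s : seq I) :
  0 <= k -> psd (\sum_(i <- s) k *: (Z i *m (Z i)^T)).
Proof.
move=> k0; elim: s => [|i s IH]; first by rewrite big_nil; exact: psd0.
by rewrite big_cons; apply: psd_add => //; apply: (psd_scale k0); exact: psd_gram.
Qed.

Lemma ldet_pos d (A : 'M[R]_d) : psd A -> 0 < \det (1%:M + A).
Proof. by move=> pA; apply/pd_det_gt0/psd_pd1. Qed.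

Lemma subadd d (I : eqType) (m : I -> nat) (Z : forall i, 'M[R]_(d, m i)) k (s : seq I) :
  0 <= k ->
  ln (\det (1%:M + \sum_(i <- s) k *: (Z i *m (Z i)^T))) <=
  \sum_(i <- s) ln (\det (1%:M + k *: (Z i *m (Z i)^T))).
Proof.
move=> k0; elim: s => [|i s IH]; first by rewrite !big_nil addr0 det1 ln1.
have pA := psd_sumZ Z s k0.
have pB : psd (k *: (Z i *m (Z i)^T)) by apply: (psd_scale k0); exact: psd_gram.
rewrite !big_cons addrA addrAC.
apply: le_trans (_ : ln (\det (1%:M + \sum_(j <- s) k *: (Z j *m (Z j)^T)) *
                     \det (1%:M + k *: (Z i *m (Z i)^T))) <= _).
  have h1 : 0 < \det (1%:M + \sum_(j <- s) k *: (Z j *m (Z j)^T) + k *: (Z i *m (Z i)^T)).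
    by rewrite -addrA; apply: ldet_pos; apply: psd_add.
  rewrite ler_ln ?posrE ?mulr_gt0 ?ldet_pos //.
  exact: det_sub.
by rewrite lnM ?posrE ?ldet_pos // [X in _ <= X]addrC lerD2r.
Qed.

Lemma subadd_eq d (I : eqType) (m : I -> nat) (Z : forall i, 'M[R]_(d, m i)) k (s : seq I) :
  0 <= k -> uniq s -> (forall i j, i != j -> (Z i)^T *m Z j = 0) ->
  ln (\det (1%:M + \sum_(i <- s) k *: (Z i *m (Z i)^T))) =
  \sum_(i <- s) ln (\det (1%:M + k *: (Z i *m (Z i)^T))).
Proof.
move=> k0 + orth; elim: s => [|i s IH]; first by rewrite !big_nil addr0 det1 ln1.
move=> /= /andP [iNs us].
have pA := psd_sumZ Z s k0.
have pB : psd (k *: (Z i *m (Z i)^T)) by apply: (psd_scale k0); exact: psd_gram.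
rewrite !big_cons addrA addrAC det_sub_eq //.
  by rewrite lnM ?posrE ?ldet_pos // addrC IH.
rewrite mulmx_suml big1_seq // => j /andP [_ js].
rewrite -scalemxAl -mulmxA orth ?mulmx0 ?scaler0 //.
by apply/eqP => ji; move: iNs; rewrite -ji js.
Qed.

End Seq.

Unset Implicit Arguments.

Theorem lemma3 (R : realType) (d C : nat) (nc : 'I_C -> nat)
  (Z : forall c : 'I_C, 'M[R]_(d, nc c)) (eps : R)
  (hd : (1 <= d)%N) (hC : (1 <= C)%N) (heps : 0 < eps)
  (hnc : forall c, (1 <= nc c)%N) :
  let n := (\sum_(c < C) nc c)%N in
  let Zh := concat_cols Z in
  (* (i) *)
  (0 <= TrR Z eps /\
   ((forall c : 'I_C, (n%:R)^-1 *: (Zh *m Zh^T) = ((nc c)%:R)^-1 *: (Z c *m (Z c)^T)) ->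
    TrR Z eps = 0)) /\
  (* (ii) *)
  (let bound := 2^-1 * \sum_(c < C)
        (logdet (1%:M + (n%:R * eps)^-1 *: (Z c *m (Z c)^T))
         - ((nc c)%:R / n%:R) * logdet (1%:M + ((nc c)%:R * eps)^-1 *: (Z c *m (Z c)^T))) in
   TrR Z eps <= bound /\
   ((forall c1 c2 : 'I_C, (c1 < c2)%N -> (Z c1)^T *m Z c2 = 0) -> TrR Z eps = bound)).
Proof.
move=> n Zh.
have hn : (0 < n)%N.
  rewrite /n (bigD1 (Ordinal hC)) //=; exact: leq_trans (hnc _) (leq_addr _ _).
have nR : 0 < (n%:R : R) by rewrite ltr0n.
have ncR c : 0 < ((nc c)%:R : R) by rewrite ltr0n.
have ZZ : Zh *m Zh^T = \sum_(c < C) Z c *m (Z c)^T.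
  by rewrite /Zh /concat_cols tr_mxrow mul_mxrow_mxcol.
set w := fun c : 'I_C => (nc c)%:R / (n%:R : R).
have wp c : 0 < w c by rewrite /w divr_gt0.
have w1 : \sum_(c < C) w c = 1.
  have nE : (n%:R : R) = \sum_(c < C) ((nc c)%:R : R) by rewrite /n natr_sum.
  by rewrite /w -mulr_suml -nE divff ?gt_eqF.
set Mc := fun c : 'I_C => 1%:M + ((nc c)%:R * eps)^-1 *: (Z c *m (Z c)^T).
have pMc c : pd (Mc c).
  apply: psd_pd1; apply: psd_scale; last exact: psd_gram.
  by rewrite invr_ge0 ltW // mulr_gt0.
set k := (n%:R * eps)^-1.
have k0 : 0 <= k by rewrite /k invr_ge0 ltW // mulr_gt0.
have Mdef : 1%:M + k *: (Zh *m Zh^T) = \sum_(c < C) w c *: Mc c.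
  rewrite [RHS](eq_bigr (fun c => w c *: 1%:M + (w c * ((nc c)%:R * eps)^-1) *: (Z c *m (Z c)^T))); last first.
    by move=> c _; rewrite /Mc scalerDr scalerA.
  rewrite big_split /= -scaler_suml w1 scale1r ZZ scaler_sumr; congr (_ + _).
  apply: eq_bigr => c _; congr (_ *: _); rewrite /w /k.
  have := ncR c; have := nR; move=> h1 h2; field.
  by rewrite !gt_eqF.
have TrRE : TrR Z eps = 2^-1 * (ln (\det (1%:M + k *: (Zh *m Zh^T)))
                          - \sum_(c < C) w c * ln (\det (Mc c))).
  rewrite /TrR /coding_rate /logdet -/n -/Zh -/k mulrBr mulr_sumr; congr (_ - _).
  by apply: eq_bigr => c _; rewrite mulrCA.
have L2 : 0 <= (2^-1 : R) by rewrite invr_ge0 ler0n.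
split; first split.
- rewrite TrRE; apply: mulr_ge0 => //; rewrite subr_ge0 Mdef; exact: logdet_concave.
- move=> H; have eM c : Mc c = 1%:M + k *: (Zh *m Zh^T).
    by rewrite /Mc /k !invfM [in LHS]mulrC -!scalerA -H !scalerA mulrC.
  rewrite TrRE (eq_bigr (fun c => w c * ln (\det (1%:M + k *: (Zh *m Zh^T))))); last first.
    by move=> c _; rewrite eM.
  by rewrite -mulr_suml w1 mul1r subrr mulr0.
move=> bound; rewrite TrRE /bound /logdet sumrB -/w.
have key : ln (\det (1%:M + k *: (Zh *m Zh^T))) <= \sum_(c < C) ln (\det (1%:M + k *: (Z c *m (Z c)^T))).
  rewrite ZZ scaler_sumr; exact: subadd.
split; first by apply: ler_wpM2l => //; rewrite lerD2r.
move=> orth; congr (_ * (_ - _)).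
rewrite ZZ scaler_sumr; apply: subadd_eq => //; first exact: index_enum_uniq.
move=> i j ij; case: (ltngtP i j) => h; first exact: orth.
  by rewrite -[LHS]trmxK trmx_mul trmxK orth ?trmx0.
by move: ij; rewrite (ord_inj h) eqxx.
Qed.
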